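(* For every $z\in\mathbb{D}^*$, $\Gamma_z=\{a-b: a,b\in\Lambda_z\}$.
   Context: For $z\in\mathbb{D}^*=\{0<|z|<1\}$, $f(x)=zx$, $g(x)=z(x-1)+1$, and $\Lambda_z$ is the unique nonempty compact subset of $\mathbb{C}$ with $\Lambda_z=f(\Lambda_z)\cup g(\Lambda_z)$. $\Gamma_z$ is the unique nonempty compact subset of $\mathbb{C}$ that equals the union of its images under the three maps $x\mapsto z(x+1)-1$, $x\mapsto zx$, $x\mapsto z(x-1)+1$. *)

(* Defs.v *)
(* The complex plane is modelled as R * R
   (R : realType) with the product topology, which is the usual topology
   of C; complex arithmetic on pairs is defined explicitly below. *)
From mathcomp Require Import all_boot all_algebra.
From mathcomp Require Import all_classical all_reals all_analysis.
Import numFieldNormedType.Exports.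
Set Implicit Arguments. Unset Strict Implicit. Unset Printing Implicit Defensive.
Local Open Scope ring_scope.
Local Open Scope classical_set_scope.

Section ComplexPairs.
Variable R : realType.
Definition cplx := (R * R)%type.
Definition cadd (x y : cplx) : cplx := (x.1 + y.1, x.2 + y.2).
Definition csub (x y : cplx) : cplx := (x.1 - y.1, x.2 - y.2).
Definition cmul (x y : cplx) : cplx := (x.1 * y.1 - x.2 * y.2, x.1 * y.2 + x.2 * y.1).
Definition cone : cplx := (1, 0).
Definition czero : cplx := (0, 0).
Definition in_punctured_disk (z : cplx) : Prop :=
  0 < z.1 ^+ 2 + z.2 ^+ 2 < 1.

Definition fmap (z x : cplx) : cplx := cmul z x.
Definition gmap (z x : cplx) : cplx := cadd (cmul z (csub x cone)) cone.
Definition h1 (z x : cplx) : cplx := csub (cmul z (cadd x cone)) cone.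
Definition h2 (z x : cplx) : cplx := cmul z x.
Definition h3 (z x : cplx) : cplx := cadd (cmul z (csub x cone)) cone.

Definition is_Lambda (z : cplx) (K : set cplx) : Prop :=
  K !=set0 /\ compact K /\ K = fmap z @` K `|` gmap z @` K.
Definition is_Gamma (z : cplx) (K : set cplx) : Prop :=
  K !=set0 /\ compact K /\ K = h1 z @` K `|` h2 z @` K `|` h3 z @` K.
End ComplexPairs.

(* Main.v *)
Require Import Defs.
From mathcomp Require Import all_boot all_order all_algebra.
From mathcomp Require Import all_classical all_reals all_analysis.
From mathcomp Require Import lra.
Import numFieldNormedType.Exports.
Import Order.TTheory GRing.Theory Num.Theory.
Set Implicit Arguments. Unset Strict Implicit.
Local Open Scope ring_scope.
Local Open Scope classical_set_scope.

Section Aux.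
Variable R : realType.
Implicit Types (x y w : cplx R).

Definition N2 (v : cplx R) : R := v.1 ^+ 2 + v.2 ^+ 2.

Lemma N2_ge0 v : 0 <= N2 v.
Proof. rewrite /N2; nra. Qed.

Lemma geo_small (q c : R) : 0 <= q < 1 -> 0 < c -> exists n : nat, q ^+ n < c.
Proof.
move=> /andP[q0 q1] c0.
have hq : `|q| < 1 by rewrite ger0_norm.
have := @cvgr_lt R _ _ _ _ _ (cvg_expr hq) _ c0.
move=> [N _ HN]; exists N; exact: (HN N (leqnn N)).
Qed.

Lemma closure_N2 (K : set (cplx R)) x :
  (forall e : R, 0 < e -> exists2 w, K w & N2 (csub x w) < e) -> closure K x.
Proof.
move=> H B /nbhs_ballP [e /= e0 Be].
have [w Kw hw] := H (e ^+ 2) (exprn_gt0 2 e0).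
exists w; split => //; apply: Be.
rewrite -ball_normE /ball_ /= prod_normE /= /N2 in hw *.
rewrite /csub /= in hw.
have ha : forall a b : R, a ^+ 2 + b ^+ 2 < e ^+ 2 -> `|a| < e.
  move=> a b hab; apply/ltr_normlP; split; nra.
rewrite gt_max; apply/andP; split; first exact: ha hw.
by apply: (ha _ (x.1 - w.1)); rewrite addrC.
Qed.

Lemma attr_sub (K1 K2 : set (cplx R)) (H : set (cplx R -> cplx R)) (q : R) :
  0 <= q < 1 ->
  (forall h, H h -> forall x y, N2 (csub (h x) (h y)) = q * N2 (csub x y)) ->
  (forall x, K1 x -> exists h, H h /\ exists y, K1 y /\ x = h y) ->
  (forall h, H h -> forall w, K2 w -> K2 (h w)) ->
  closed K2 -> forall w0, K2 w0 -> forall B,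
  (forall x, K1 x -> N2 (csub x w0) <= B) ->
  K1 `<=` K2.
Proof.
move=> /andP[q0 q1] hc hK1 hK2 cK2 w0 K2w0 B hB.
have claim : forall n x, K1 x -> exists2 w, K2 w & N2 (csub x w) <= q ^+ n * B.
  elim => [|n IH] x K1x.
    by exists w0 => //; rewrite expr0 mul1r; exact: hB.
  have [h [Hh [y [K1y ->]]]] := hK1 x K1x.
  have [w K2w hw] := IH y K1y.
  exists (h w); first exact: hK2.
  by rewrite hc // exprS -mulrA ler_wpM2l.
move=> x K1x; apply: cK2; apply: closure_N2 => e e0.
have B0 : 0 <= B by apply: le_trans (hB x K1x); exact: N2_ge0.
have B1 : 0 < B + 1 by lra.
have [n hn] : exists n : nat, q ^+ n < e / (B + 1).
  by apply: geo_small; [apply/andP; split | exact: divr_gt0].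
have [w K2w hw] := claim n x K1x.
exists w => //; apply: (le_lt_trans hw).
rewrite ltr_pdivlMr // in hn.
have t0 : 0 <= q ^+ n by exact: exprn_ge0.
move: hn t0; set t := q ^+ n => hn t0; nra.
Qed.

Lemma compact_N2_bound (K : set (cplx R)) w0 : compact K ->
  exists B, forall x, K x -> N2 (csub x w0) <= B.
Proof.
move=> /compact_bounded [M [Mreal HM]].
have hM := HM (`|M| + 1) (le_lt_trans (real_ler_norm Mreal) (ltr_pwDr ltr01 (lexx _))) .
set c := `|M| + 1 + `|w0|.
exists (c ^+ 2 + c ^+ 2) => x Kx.
have hx : `|x - w0| <= c by apply: le_trans (ler_normB _ _) _; rewrite lerD2r; exact: hM.
rewrite prod_normE ge_max in hx; case/andP: hx => h1 h2.
rewrite /N2 /csub /=.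
move/ler_normlP: h1 => [h1a h1b]; move/ler_normlP: h2 => [h2a h2b].
rewrite /= in h1a h1b h2a h2b.
nra.
Qed.

Lemma compact_diff (K : set (cplx R)) : compact K ->
  compact [set csub a b | a in K & b in K].
Proof.
move=> cK; rewrite image2E.
apply: continuous_compact; last exact: compact_setX.
apply: continuous_subspaceT => p.
have -> : uncurry (@csub R) = (fun x : cplx R * cplx R => x.1 - x.2).
  by apply: funext => -[a b].
exact: sub_continuous.
Qed.
End Aux.

From mathcomp Require Import ring.

Theorem lemma6p1p1 (R : realType) (z : cplx R) (Lambda Gamma : set (cplx R)) :
  in_punctured_disk z -> is_Lambda z Lambda -> is_Gamma z Gamma ->
  Gamma = [set csub a b | a in Lambda & b in Lambda].
Proof.
move=> hz [[l0 Ll0] [cL eL]] [[g0 Gg0] [cG eG]].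
set D := [set csub a b | a in Lambda & b in Lambda].
set H := fun h : cplx R -> cplx R => h = h1 z \/ h = h2 z \/ h = h3 z.
have q01 : 0 <= N2 z < 1.
  by move: hz; rewrite /in_punctured_disk /N2 => /andP[/ltW -> ->].
have hc : forall h, H h -> forall x y, N2 (csub (h x) (h y)) = N2 z * N2 (csub x y).
  move=> h [->|[->|->]] x y; rewrite /N2 /h1 /h2 /h3 /csub /Defs.cadd /cmul /cone /=; ring.
have LmemF : forall a, Lambda a -> Lambda (Defs.fmap z a).
  by move=> a La; rewrite eL; left; exists a.
have LmemG : forall a, Lambda a -> Lambda (gmap z a).
  by move=> a La; rewrite eL; right; exists a.
have cD : compact D by exact: compact_diff.
apply/seteqP; split.
- have [B hB] := compact_N2_bound (csub l0 l0) cG.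
  apply: (attr_sub q01 hc _ _ _ _ hB).
  + move=> x; rewrite {1}eG => -[[[y Gy <-]|[y Gy <-]]|[y Gy <-]].
    * by exists (h1 z); split; [left | exists y].
    * by exists (h2 z); split; [right; left | exists y].
    * by exists (h3 z); split; [right; right | exists y].
  + move=> h [->|[->|->]] _ [a La [b Lb <-]].
    * exists (Defs.fmap z a); first exact: LmemF.
      exists (gmap z b); first exact: LmemG.
      by rewrite /h1 /Defs.fmap /gmap /csub /Defs.cadd /cmul /cone /=; congr (_, _); ring.
    * exists (Defs.fmap z a); first exact: LmemF.
      exists (Defs.fmap z b); first exact: LmemF.
      by rewrite /h2 /Defs.fmap /gmap /csub /Defs.cadd /cmul /cone /=; congr (_, _); ring.
    * exists (gmap z a); first exact: LmemG.
      exists (Defs.fmap z b); first exact: LmemF.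
      by rewrite /h3 /Defs.fmap /gmap /csub /Defs.cadd /cmul /cone /=; congr (_, _); ring.
  + exact: compact_closed.
  + by exists l0 => //; exists l0.
- have [B hB] := compact_N2_bound g0 cD.
  apply: (attr_sub q01 hc _ _ _ Gg0 hB).
  + move=> _ [a La [b Lb <-]].
    rewrite eL in La Lb; move: La Lb.
    move=> [[a' La' <-]|[a' La' <-]] [[b' Lb' <-]|[b' Lb' <-]].
    * exists (h2 z); split; first by right; left.
      exists (csub a' b'); split; first by exists a' => //; exists b'.
      by rewrite /h2 /Defs.fmap /gmap /csub /Defs.cadd /cmul /cone /=; congr (_, _); ring.
    * exists (h1 z); split; first by left.
      exists (csub a' b'); split; first by exists a' => //; exists b'.
      by rewrite /h1 /Defs.fmap /gmap /csub /Defs.cadd /cmul /cone /=; congr (_, _); ring.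
    * exists (h3 z); split; first by right; right.
      exists (csub a' b'); split; first by exists a' => //; exists b'.
      by rewrite /h3 /Defs.fmap /gmap /csub /Defs.cadd /cmul /cone /=; congr (_, _); ring.
    * exists (h2 z); split; first by right; left.
      exists (csub a' b'); split; first by exists a' => //; exists b'.
      by rewrite /h2 /Defs.fmap /gmap /csub /Defs.cadd /cmul /cone /=; congr (_, _); ring.
  + move=> h [->|[->|->]] w Gw; rewrite eG.
    * by left; left; exists w.
    * by left; right; exists w.
    * by right; exists w.
  + exact: compact_closed.
Qed.
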